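(* Let $\mathcal X$ and $\mathcal Y$ be measurable spaces, let $\Theta$ be a parameter set, and let $L(\theta;y,x)$ be a real-valued loss on $\Theta\times\mathcal Y\times\mathcal X$. Let $\theta(\cdot)$ be the regression functional $\theta(P)=\mathrm{argmin}_{\theta\in\Theta}\,E_P[L(\theta;Y,X)]$ (assumed to exist uniquely for the joint distributions on which it is evaluated). Fix a Markov kernel $P_{Y|X}$. If there is $\theta_0\in\Theta$ that minimizes $\theta\mapsto E[L(\theta;Y,x)\mid X=x]=\int L(\theta;y,x)\,P_{Y|X=x}(dy)$ for every $x\in\mathcal X$, then $\theta(\cdot)$ is well-specified for $P_{Y|X}$, and moreover $\theta(P_{Y|X}\otimes P_X)=\theta_0$ for every acceptable regressor distribution $P_X$.
   Context: A joint distribution $P$ of $(Y,X)$ on $\mathcal Y\times\mathcal X$ is written $P=P_{Y|X}\otimes P_X$, meaning $P(dy,dx)=P_{Y|X=x}(dy)\,P_X(dx)$, where $P_X$ is the marginal distribution of the regressor $X$ and $P_{Y|X}: x\mapsto P_{Y|X=x}$ is a Markov kernel (a regular conditional distribution defined for every $x$). A regression functional assigns a value $\theta(P)\in\Theta$ to joint distributions $P$ in a class $\mathcal P$. There is a designated set of ''acceptable'' regressor distributions (those for which the functional is identifiable/defined); $P_{Y|X}\otimes P_X\in\mathcal P$ for every acceptable $P_X$, and the set of acceptable distributions is closed under mixing: if $P_X$ is acceptable and $P_X'$ is any distribution on $\mathcal X$, then $\alpha P_X+(1-\alpha)P_X'$ is acceptable for $0<\alpha\le 1$. The functional $\theta$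 is called well-specified for $P_{Y|X}$ if $\theta(P_{Y|X}\otimes P_X)=\theta(P_{Y|X}\otimes P_X')$ for all acceptable regressor distributions $P_X,P_X'$. All expectations are assumed to exist. *)

(* Defs.v *)
From HB Require Import structures.
From mathcomp Require Import all_boot all_order all_algebra.
From mathcomp Require Import all_classical all_reals all_analysis.
Set Implicit Arguments. Unset Strict Implicit. Unset Printing Implicit Defensive.
Import Order.TTheory GRing.Theory Num.Theory.
Local Open Scope classical_set_scope.
Local Open Scope ring_scope.
Local Open Scope ereal_scope.

(* Joint distributions of (Y,X) live on Y * X,
   so a pair is (y, x), matching the paper's L(theta; y, x). *)

(* P is the joint distribution P_{Y|X} (x) P_X :
   P(dy,dx) = P_{Y|X=x}(dy) P_X(dx), i.e. for every measurable A,
   P A = \int P_{Y|X=x}({y | (y,x) \in A}) P_X(dx). *)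
Definition is_joint {dX dY} {X : measurableType dX} {Y : measurableType dY}
  {R : realType} (k : R.-pker X ~> Y) (PX : probability X R)
  (P : probability (Y * X)%type R) : Prop :=
  forall A : set (Y * X), measurable A ->
    P A = \int[PX]_x (k x (ysection A x)).

Definition risk {dX dY} {X : measurableType dX} {Y : measurableType dY}
  {R : realType} {Theta : Type} (L : Theta -> Y -> X -> R)
  (P : probability (Y * X)%type R) (t : Theta) : \bar R :=
  \int[P]_z (L t z.1 z.2)%:E.

Definition cond_risk {dX dY} {X : measurableType dX} {Y : measurableType dY}
  {R : realType} {Theta : Type} (L : Theta -> Y -> X -> R)
  (k : R.-pker X ~> Y) (x : X) (t : Theta) : \bar R :=
  \int[k x]_y (L t y x)%:E.

Definition is_argmin {Theta : Type} {R : realType} (f : Theta -> \bar R)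
  (t : Theta) : Prop := forall t', f t <= f t'.

Definition unique_argmin {Theta : Type} {R : realType} (f : Theta -> \bar R)
  (t : Theta) : Prop := is_argmin f t /\ forall t', is_argmin f t' -> t' = t.

(* The regression functional theta(P) = argmin_theta E_P[L(theta;Y,X)];
   it is the unique minimizer when one exists (the only case in which it is
   evaluated); otherwise an arbitrary default point of Theta. *)
Definition reg_functional {dX dY} {X : measurableType dX}
  {Y : measurableType dY} {R : realType} {Theta : pointedType}
  (L : Theta -> Y -> X -> R) (P : probability (Y * X)%type R) : Theta :=
  match pselect (exists t, unique_argmin (risk L P) t) with
  | left h => projT1 (cid h)
  | right _ => point
  end.

Definition well_specified {dX dY} {X : measurableType dX}
  {Y : measurableType dY} {R : realType} {Theta : Type}
  (theta : probability (Y * X)%type R -> Theta)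
  (acceptable : set (probability X R)) (k : R.-pker X ~> Y) : Prop :=
  forall (PX PX' : probability X R) (P P' : probability (Y * X)%type R),
    acceptable PX -> acceptable PX' -> is_joint k PX P -> is_joint k PX' P' ->
    theta P = theta P'.

Definition mixing_closed {dX} {X : measurableType dX} {R : realType}
  (acceptable : set (probability X R)) : Prop :=
  forall (PX PX' Q : probability X R) (a : R), acceptable PX ->
    (0 < a <= 1)%R ->
    (forall A, measurable A -> Q A = (a%:E * PX A + (1 - a)%:E * PX' A)) ->
    acceptable Q.

(* Main.v *)
Require Import Defs.
From HB Require Import structures.
From mathcomp Require Import all_boot all_order all_algebra.
From mathcomp Require Import all_classical all_reals all_analysis.
From mathcomp Require Import measurable_realfun.
Import Order.TTheory GRing.Theory Num.Theory.
Local Open Scope classical_set_scope.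
Local Open Scope ring_scope.
Local Open Scope ereal_scope.
Section disint.
Context (dX dY : measure_display) (X : measurableType dX)
  (Y : measurableType dY) (R : realType) (k : R.-pker X ~> Y).

Lemma mker (f : Y * X -> \bar R) : (forall z, 0 <= f z) ->
  measurable_fun [set: Y * X] f ->
  measurable_fun [set: X] (fun x => \int[k x]_y f (y, x)).
Proof.
move=> f0 mf.
pose g := (fun p : (X * Y)%type => (snd p, fst p)).
have := @measurable_fun_integral_sfinite_kernel _ _ X Y R (f \o g) k.
apply; first by move=> t; exact: f0.
apply: measurableT_comp => //.
exact: measurable_swap.
Qed.

Context (PX : probability X R) (P : probability (Y * X)%type R)
  (hj : is_joint k PX P).

Lemma disint_indic (A : set (Y * X)) : measurable A ->
  \int[P]_z (\1_A z)%:E = \int[PX]_x \int[k x]_y (\1_A (y, x))%:E.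
Proof.
move=> mA; rewrite integral_indic// setIT.
apply: eq_trans (hj A mA) _.
apply: eq_integral => x _.
rewrite -(setIT (ysection A x)) -integral_indic//; last exact: measurable_ysection.
apply: eq_integral => y _; congr (_%:E).
by rewrite /indic mem_ysection.
Qed.


Import HBNNSimple.

Lemma disint_scaled_indic (r : R) (B : set (Y * X)) : measurable B ->
  (0 <= r)%R ->
  \int[P]_z (r * \1_B z)%:E = \int[PX]_x \int[k x]_y (r * \1_B (y, x))%:E.
Proof.
move=> mB r0.
have mi : measurable_fun [set: Y * X] (fun z => (\1_B z : R)%:E).
  have h1 : measurable_fun setT (\1_B : Y * X -> R) := measurable_indic mB.
  exact: (proj2 (measurable_EFinP _ _) h1).
under eq_integral do rewrite EFinM.
rewrite ge0_integralZl //; try (by move=> ? _; rewrite lee_fin); try exact: mi.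
under [RHS]eq_integral => x _.
  under eq_integral do rewrite EFinM.
  rewrite ge0_integralZl //; try (by move=> ? _; rewrite lee_fin); try (apply: (measurableT_comp mi); exact: pair2_measurable).
  over.
rewrite /=.
rewrite ge0_integralZl//; last 2 first.
- apply: (mker (fun z => (\1_B z : R)%:E)) => //.
  all: try by move=> z /=; rewrite lee_fin.
- by move=> x _; apply: integral_ge0 => y _; rewrite lee_fin.
by rewrite disint_indic.
Qed.

Lemma disint_nnsfun (f : {nnsfun (Y * X)%type >-> R}) :
  \int[P]_z (f z)%:E = \int[PX]_x \int[k x]_y (f (y, x))%:E.
Proof.
under [in LHS]eq_integral do rewrite fimfunE -fsumEFin//.
rewrite ge0_integral_fsum//; last 2 first.
  - by move=> r; exact/measurable_EFinP/measurableT_comp.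
  - by move=> r z _; rewrite nnfun_muleindic_ge0.
under [in RHS]eq_integral.
  move=> x _.
  under eq_integral do rewrite fimfunE -fsumEFin//.
  rewrite /= ge0_integral_fsum//; last 2 first.
    - move=> r; apply/measurable_EFinP.
      apply: (measurable_fun_pair1 (f := fun z => (r * \1_(f @^-1` [set r]) z)%R)).
      exact/measurableT_comp.
    - by move=> r y _; rewrite nnfun_muleindic_ge0.
  over.
rewrite /= ge0_integral_fsum//; last 2 first.
  - move=> r; apply: (mker (fun z => (r * \1_(f @^-1` [set r]) z)%:E)).
    + by move=> z; rewrite nnfun_muleindic_ge0.
    + exact/measurable_EFinP/measurableT_comp.
  - by move=> r x _; apply: integral_ge0 => y _; rewrite nnfun_muleindic_ge0.
apply: eq_fsbigr => r _.
have [r0|r0] := leP 0%R r.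
  by apply: disint_scaled_indic.
transitivity (0 : \bar R).
  by apply: integral0_eq => z _; rewrite preimage_nnfun0// indic0 mulr0.
apply/esym/integral0_eq => x _.
by apply: integral0_eq => y _; rewrite preimage_nnfun0// indic0 mulr0.
Qed.


Lemma disint (f : Y * X -> \bar R) : (forall z, 0 <= f z) ->
  measurable_fun [set: Y * X] f ->
  \int[P]_z f z = \int[PX]_x \int[k x]_y f (y, x).
Proof.
move=> f0 mf.
pose f_ := nnsfun_approx measurableT mf.
have mfn n x : measurable_fun [set: Y] (fun y => (f_ n (y, x))%:E).
  apply/measurable_EFinP; apply: measurableT_comp => //.
transitivity (\int[P]_z (lim ((f_ n z)%:E @[n --> \oo]))).
  by apply/eq_integral => z _; apply/esym/cvg_lim => //=; exact: cvg_nnsfun_approx.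
rewrite monotone_convergence//; last 3 first.
  by move=> n; exact/measurable_EFinP.
  by move=> n z _; rewrite lee_fin.
  by move=> z _ a b ab; rewrite lee_fin; exact/lefP/nd_nnsfun_approx.
rewrite (_ : (fun _ => _) =
    (fun n => \int[PX]_x (\int[k x]_y (f_ n (y, x))%:E)))//; last first.
  by apply/funext => n; rewrite disint_nnsfun.
transitivity (\int[PX]_x lim ((\int[k x]_y (f_ n (y, x))%:E) @[n --> \oo])).
  rewrite -monotone_convergence//; last 3 first.
  - move=> n; apply: (mker (fun z => (f_ n z)%:E)).
    + by move=> z /=; rewrite lee_fin.
    + exact/measurable_EFinP.
  - by move=> n x _; apply: integral_ge0 => y _; rewrite lee_fin.
  - move=> x _ a b ab; apply: ge0_le_integral => //.
    + by move=> y _; rewrite lee_fin.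
    + by move=> y _; rewrite lee_fin; exact/lefP/nd_nnsfun_approx.
apply: eq_integral => x _; rewrite -monotone_convergence //;
  try (by move=> n y _; rewrite lee_fin);
  try (by move=> y _ a b ab; rewrite lee_fin; exact/lefP/nd_nnsfun_approx).
by apply: eq_integral => y _; apply/cvg_lim => //; exact: cvg_nnsfun_approx.
Qed.

End disint.

From mathcomp Require Import lra.

Lemma ereal_arith (R : realType) (a b c d : \bar R) :
  a \is a fin_num -> b \is a fin_num -> c \is a fin_num -> d \is a fin_num ->
  a + d <= c + b -> a - b <= c - d.
Proof.
move: a b c d => [a| |] [b| |] [c| |] [d| |] //= _ _ _ _.
rewrite -!EFinD !lee_fin => h; lra.
Qed.

Section main.
Context (dX dY : measure_display) (X : measurableType dX)
  (Y : measurableType dY) (R : realType) (Theta : pointedType)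
  (L : Theta -> Y -> X -> R) (k : R.-pker X ~> Y)
  (hL_meas : forall t, measurable_fun [set: Y * X] (fun z => L t z.1 z.2))
  (hint_cond : forall t x, (k x).-integrable [set: Y] (fun y => (L t y x)%:E)).

Let G s : Y * X -> \bar R := fun z => (L s z.1 z.2)%:E.

Let mG s : measurable_fun [set: Y * X] (G s).
Proof. exact: (proj2 (measurable_EFinP _ _) (hL_meas s)). Qed.

Let A s x := \int[k x]_y (G s)^\+ (y, x).
Let B s x := \int[k x]_y (G s)^\- (y, x).

Let cond_split s x : cond_risk L k x s = A s x - B s x.
Proof.
rewrite /cond_risk integralE /A /B.
congr (_ - _); apply: eq_integral => y _; by rewrite !(funeposE, funenegE).
Qed.

Let finA s x : A s x \is a fin_num.
Proof.
have := integrable_pos_fin_num measurableT (hint_cond s x).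
by congr (_ \is a fin_num); apply: eq_integral => y _; rewrite !funeposE.
Qed.

Let finB s x : B s x \is a fin_num.
Proof.
have := integrable_neg_fin_num measurableT (hint_cond s x).
by congr (_ \is a fin_num); apply: eq_integral => y _; rewrite !funenegE.
Qed.

Let mA s : measurable_fun [set: X] (A s).
Proof.
rewrite /A /B; apply: (@mker _ _ _ _ _ k (G s)^\+); first by move=> z; exact: funepos_ge0.
exact: measurable_funepos.
Qed.

Let mB s : measurable_fun [set: X] (B s).
Proof.
rewrite /A /B; apply: (@mker _ _ _ _ _ k (G s)^\-); first by move=> z; exact: funeneg_ge0.
exact: measurable_funeneg.
Qed.

Lemma argmin0 (theta0 : Theta) (hmin : forall x, is_argmin (cond_risk L k x) theta0)
  (PX : probability X R) (P : probability (Y * X)%type R) (hj : is_joint k PX P)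
  (hint : forall t, P.-integrable [set: Y * X] (fun z => (L t z.1 z.2)%:E)) :
  is_argmin (risk L P) theta0.
Proof.
move=> t.
have eqA s : \int[P]_z (G s)^\+ z = \int[PX]_x A s x :=
  @disint _ _ _ _ _ k PX P hj (G s)^\+ (fun z => funepos_ge0 _ z)
    (measurable_funepos (mG s)).
have eqB s : \int[P]_z (G s)^\- z = \int[PX]_x B s x :=
  @disint _ _ _ _ _ k PX P hj (G s)^\- (fun z => funeneg_ge0 _ z)
    (measurable_funeneg (mG s)).
have fA s : \int[PX]_x A s x \is a fin_num.
  rewrite -eqA; have := integrable_pos_fin_num measurableT (hint s); exact.
have fB s : \int[PX]_x B s x \is a fin_num.
  rewrite -eqB; have := integrable_neg_fin_num measurableT (hint s); exact.
rewrite /risk integralE [leRHS]integralE.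
rewrite -/(G theta0) -/(G t).
rewrite !eqA !eqB.
apply: ereal_arith => //.
have A0 s x : 0 <= A s x by apply: integral_ge0 => y _; exact: funepos_ge0.
have B0 s x : 0 <= B s x by apply: integral_ge0 => y _; exact: funeneg_ge0.
rewrite -!ge0_integralD //.
apply: ge0_le_integral => //.
all: try by move=> x _; rewrite adde_ge0.
all: try by apply: emeasurable_funD.
move=> x _.
have := hmin x t; rewrite !cond_split.
move: (finA theta0 x) (finB theta0 x) (finA t x) (finB t x).
move: (A theta0 x) (B theta0 x) (A t x) (B t x) => [a| |] [b| |] [c| |] [d| |] //= _ _ _ _.
rewrite -!EFinD !lee_fin => h; lra.
Qed.

End main.
Theorem lemma3p3p1 (dX dY : measure_display) (X : measurableType dX)
  (Y : measurableType dY) (R : realType) (Theta : pointedType)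
  (L : Theta -> Y -> X -> R) (k : R.-pker X ~> Y)
  (acceptable : set (probability X R))
  (* standing assumptions of the context *)
  (hmix : mixing_closed acceptable)
  (hL_meas : forall t, measurable_fun [set: Y * X] (fun z => L t z.1 z.2))
  (hint_cond : forall t x, (k x).-integrable [set: Y] (fun y => (L t y x)%:E))
  (hint_joint : forall PX P t, acceptable PX -> is_joint k PX P ->
     P.-integrable [set: Y * X] (fun z => (L t z.1 z.2)%:E))
  (hdef : forall PX P, acceptable PX -> is_joint k PX P ->
     exists t, unique_argmin (risk L P) t)
  (* hypothesis of the lemma *)
  (theta0 : Theta)
  (hmin : forall x, is_argmin (cond_risk L k x) theta0) :
  well_specified (reg_functional L) acceptable k /\
  (forall PX P, acceptable PX -> is_joint k PX P ->
     reg_functional L P = theta0).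
Proof.
have H2 : forall PX P, acceptable PX -> is_joint k PX P ->
    reg_functional L P = theta0.
  move=> PX P hPX hj.
  have am := @argmin0 _ _ _ _ _ _ L k hL_meas hint_cond theta0 hmin PX P hj
    (fun t => hint_joint PX P t hPX hj).
  rewrite /reg_functional; case: pselect => [h|[]]; last exact: hdef PX P hPX hj.
  case: (cid h) => t1 [_ u1] /=.
  by apply/esym; exact: u1.
split => //.
move=> PX PX' P P' h1 h2 j1 j2.
by rewrite (H2 _ _ h1 j1) (H2 _ _ h2 j2).
Qed.
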